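(* Let $l:\mathbb{R}^p\to\mathbb{R}$ be a convex and differentiable function, let $\lambda_1\ge\lambda_2\ge\dots\ge\lambda_p\ge 0$ be arbitrary, and let $$\hat b\in\operatorname{argmin}_{b\in\mathbb{R}^p}\Big\{l(b)+\sum_{i=1}^p\lambda_i|b|_{(i)}\Big\}.$$ Let $U(b)=-\nabla l(b)$ and for $a>0$ let $T(a)=U(\hat b)+a\hat b$. Assume $R:=\#\{i:\hat b_i\neq 0\}=r$. Then for any $a>0$ and every $i$: (1) $\hat b_i\neq 0 \iff |T_i(a)|>\lambda_r$; (2) $\hat b_i\neq 0 \implies |U_i(\hat b)|\ge\lambda_r$. Moreover, if $\lambda_1>\lambda_2>\dots>\lambda_p\ge 0$, then $|U_i(\hat b)|\ge\lambda_r\implies\hat b_i\neq 0$.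
   Context: $|b|_{(1)}\ge\dots\ge|b|_{(p)}$ denote the ordered absolute values of the entries of $b\in\mathbb{R}^p$. *)

(* Defs.v *)
From HB Require Import structures.
From mathcomp Require Import all_boot all_order all_algebra.
From mathcomp Require Import all_classical all_reals all_analysis.
Set Implicit Arguments. Unset Strict Implicit. Unset Printing Implicit Defensive.
Import Order.TTheory GRing.Theory Num.Theory.
Import numFieldNormedType.Exports.
Local Open Scope ring_scope.

(* |b|_(k+1) : the (k+1)-th largest absolute value of the entries of b
   (0-based index k; entries sorted in nonincreasing order). *)
Definition ordabs (R : realType) (p : nat) (b : 'rV[R]_p) (k : nat) : R :=
  nth 0 (sort (fun x y : R => y <= x) [seq `|b 0 j| | j <- enum 'I_p]) k.

(* SLOPE penalty  sum_{i=1}^p lambda_i |b|_(i), with lambda_i = lam (i-1). *)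
Definition slope_pen (R : realType) (p : nat) (lam : nat -> R) (b : 'rV[R]_p) : R :=
  \sum_(k < p) lam k * ordabs b k.

Definition convex_fun (R : realType) (p : nat) (l : 'rV[R]_p -> R) : Prop :=
  forall (x y : 'rV[R]_p) (t : R), 0 <= t <= 1 ->
    l (t *: x + (1 - t) *: y) <= t * l x + (1 - t) * l y.

Definition Ucoord (R : realType) (p : nat) (l : 'rV[R]_p -> R) (b : 'rV[R]_p)
  (i : 'I_p) : R := - derive l b (delta_mx 0 i : 'rV[R]_p).

Definition Tcoord (R : realType) (p : nat) (l : 'rV[R]_p -> R) (bhat : 'rV[R]_p)
  (a : R) (i : 'I_p) : R := Ucoord l bhat i + a * bhat 0 i.

(* Main.v *)
Require Import Defs.
From HB Require Import structures.
From mathcomp Require Import all_boot all_order all_algebra.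
From mathcomp Require Import all_classical all_reals all_analysis.
From mathcomp Require Import ring lra zify.
Import Order.TTheory GRing.Theory Num.Theory.
Import numFieldNormedType.Exports.
Local Open Scope ring_scope.

Section Comb.
Variable R : realType.

Fixpoint wsum (lam : nat -> R) (s : seq R) : R :=
  match s with [::] => 0 | x :: s' => lam 0%N * x + wsum (fun k => lam k.+1) s' end.

Lemma wsum_big lam s : wsum lam s = \sum_(k < size s) lam k * s`_k.
Proof.
elim: s lam => [|x s IH] lam /=; first by rewrite big_ord0.
by rewrite big_ord_recl IH.
Qed.

Lemma wsum_swap lam u a w :
  (forall y, y \in u -> y <= a) ->
  (forall i j, (i <= j <= size u)%N -> lam j <= lam i) ->
  wsum lam (u ++ a :: w) <= wsum lam (a :: u ++ w).
Proof.
elim: u lam => [|b u IH] lam Hu Hl /=; first by [].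
have H1 := IH (fun k => lam k.+1) (fun y yu => Hu y (@mem_behead _ (b :: u) y yu))
   (fun i j hij => Hl i.+1 j.+1 hij).
rewrite /= in H1.
have Hba : b <= a by apply: Hu; rewrite inE eqxx.
have Hl10 : lam 1%N <= lam 0%N by apply: Hl.
apply: le_trans (lerD (lexx _) H1) _.
rewrite !addrA lerD2r.
have : 0 <= (lam 0%N - lam 1%N) * (a - b) by apply: mulr_ge0; rewrite subr_ge0.
move=> h; rewrite -subr_ge0; apply: le_trans h _; rewrite le_eqVlt; apply/orP; left.
apply/eqP; ring.
Qed.

Lemma wsum_rearr lam s t :
  sorted (fun x y : R => y <= x) s -> perm_eq s t ->
  (forall i j, (i <= j < size s)%N -> lam j <= lam i) ->
  wsum lam t <= wsum lam s.
Proof.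
elim: s t lam => [|a s IH] t lam Hs Hp Hl.
  by move: Hp; rewrite perm_sym => /perm_nilP ->.
have ain : a \in t by rewrite -(perm_mem Hp) inE eqxx.
have Hall : forall y, y \in a :: s -> y <= a.
  move=> y; rewrite inE => /orP [/eqP -> //|ys].
  have tr : transitive (fun x y : R => y <= x) by move=> ? ? ? h1 h2; exact: le_trans h2 h1.
  have := order_path_min tr Hs.
  by move=> /allP /(_ y ys).
move: Hp; case/splitPr: ain => u w Hp.
have Hp2 : perm_eq s (u ++ w).
  rewrite -(perm_cons a); apply: perm_trans Hp _.
  by rewrite -cat1s perm_catCA.
have Hsz : size (u ++ a :: w) = size (a :: s) by rewrite (perm_size Hp).
apply: (le_trans (@wsum_swap lam u a w _ _)).
- by move=> y yu; apply: Hall; rewrite (perm_mem Hp) mem_cat yu.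
- move=> i j /andP [hij hj]; apply: Hl; rewrite hij /=.
  apply: leq_ltn_trans hj _; move: Hsz; rewrite size_cat /= addnS => [[<-]].
  by rewrite ltnS leq_addr.
rewrite /= lerD2l; apply: IH => //.
- by move: Hs => /= /path_sorted.
- by move=> i j hij; apply: Hl.
Qed.

Lemma wsum_set_nth lam s k w : (k < size s)%N ->
  wsum lam (set_nth 0 s k w) = wsum lam s + lam k * (w - s`_k).
Proof.
elim: s k lam => [|x s IH] [|k] lam //= hk.
  by rewrite mulrBr; ring.
by rewrite IH //; ring.
Qed.

Lemma perm_swap2 (x y : R) s : perm_eq (x :: y :: s) (y :: x :: s).
Proof. by move: (perm_catCA [:: x] [:: y] s (y :: x :: s)) => /= ->. Qed.

Lemma perm_set_nth1 (s : seq R) k w : (k < size s)%N ->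
  perm_eq (s`_k :: set_nth 0 s k w) (w :: s).
Proof.
elim: s k => [|x s IH] [|k] //= hk.
  exact: perm_swap2.
have := IH k hk.
rewrite -(perm_cons x) => H.
apply: perm_trans (perm_trans H _); exact: perm_swap2.
Qed.

Lemma perm_set_nth (s1 s2 : seq R) k1 k2 w :
  perm_eq s1 s2 -> (k1 < size s1)%N -> (k2 < size s2)%N -> s1`_k1 = s2`_k2 ->
  perm_eq (set_nth 0 s1 k1 w) (set_nth 0 s2 k2 w).
Proof.
move=> Hp h1 h2 he.
rewrite -(perm_cons (s1`_k1)).
apply: perm_trans (@perm_set_nth1 s1 k1 w h1) _.
rewrite he perm_sym; apply: perm_trans (@perm_set_nth1 s2 k2 w h2) _.
by rewrite perm_cons perm_sym.
Qed.


Lemma cnt p (P : pred 'I_p) : count P (enum 'I_p) = #|[set j | P j]|.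
Proof. rewrite -size_filter cardsE cardE. congr size. rewrite /enum_mem -filter_predI. by apply: eq_filter => x /=; rewrite andbT. Qed.

Variable p : nat.
Definition absseq (x : 'rV[R]_p) := [seq `|x 0 j| | j <- enum 'I_p].
Definition srt x := sort (fun a b : R => b <= a) (absseq x).

Lemma size_absseq x : size (absseq x) = p.
Proof. by rewrite size_map size_enum_ord. Qed.

Lemma size_srt x : size (srt x) = p.
Proof. by rewrite size_sort size_absseq. Qed.

Lemma pen_wsum lam x : slope_pen lam x = wsum lam (srt x).
Proof. by rewrite wsum_big size_srt. Qed.

Lemma srt_sorted x : sorted (fun a b : R => b <= a) (srt x).
Proof. apply: sort_sorted => a b; exact: le_total. Qed.

Lemma perm_srt x : perm_eq (srt x) (absseq x).
Proof. by rewrite perm_sort. Qed.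

Lemma count_srt (P : pred R) x : count P (srt x) = #|[set j | P `|x 0 j|]|.
Proof. by rewrite (permP (perm_srt x)) count_map cnt. Qed.

Lemma nth_absseq x (j : 'I_p) : (absseq x)`_j = `|x 0 j|.
Proof. by rewrite (nth_map j) ?size_enum_ord // nth_ord_enum. Qed.

Lemma absseq_set (x y : 'rV[R]_p) (i : 'I_p) : (forall j, j != i -> x 0 j = y 0 j) ->
  absseq x = set_nth 0 (absseq y) i `|x 0 i|.
Proof.
move=> H; apply: (@eq_from_nth _ 0).
  by rewrite size_set_nth !size_absseq; apply/esym/maxn_idPr.
rewrite size_absseq => k hk.
rewrite nth_set_nth /= -[k]/(nat_of_ord (Ordinal hk)) !nth_absseq.
case: ifP => [/eqP e|/negbT ne].
  by congr `|x 0 _|; apply: val_inj.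
by rewrite H.
Qed.


Lemma key (lam : nat -> R) (x y : 'rV[R]_p) (i : 'I_p) :
  (forall j, j != i -> x 0 j = y 0 j) ->
  (forall a b, (a <= b < p)%N -> lam b <= lam a) ->
  wsum lam (srt y) + lam (index `|y 0 i| (srt y)) * (`|x 0 i| - `|y 0 i|)
    <= slope_pen lam x.
Proof.
move=> H Hl.
set v := `|y 0 i|.
have vin : `|y 0 i| \in srt y.
  by rewrite (perm_mem (perm_srt y)); apply: (map_f (fun j => `|y 0 j|)); rewrite mem_enum.
have hk : (index v (srt y) < size (srt y))%N by rewrite index_mem.
have e := nth_index 0 vin.
rewrite -[X in _ - X]e -wsum_set_nth // pen_wsum.
apply: wsum_rearr; first exact: srt_sorted.
  apply: perm_trans (perm_srt x) _.
  rewrite (@absseq_set x y i H); apply: perm_set_nth => //.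
  - by rewrite perm_sym perm_srt.
  - by rewrite size_absseq.
  - by rewrite nth_absseq e.
by rewrite size_srt.
Qed.

Lemma count_take_drop (P : pred R) (s : seq R) k :
  count P s = (count P (take k s) + count P (drop k s))%N.
Proof. by rewrite -count_cat cat_take_drop. Qed.

Lemma srt_ge x m n : (m <= n < p)%N -> (srt x)`_n <= (srt x)`_m.
Proof.
move=> /andP [hmn hn].
have tr : transitive (fun a b : R => b <= a) by move=> ? ? ? h1 h2; exact: le_trans h2 h1.
apply: (sorted_leq_nth tr (fun a => lexx a) 0 (srt_sorted x)) => //; rewrite inE size_srt //.
exact: leq_ltn_trans hn.
Qed.


Lemma ycoord (x : 'rV[R]_p) (i : 'I_p) (h : R) (j : 'I_p) :
  (h *: delta_mx 0 i + x) 0 j = if j == i then x 0 j + h else x 0 j.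
Proof.
rewrite !mxE /=; case: (j == i) => /=; rewrite ?mulr1 ?mulr0 ?add0r //.
by rewrite addrC.
Qed.

Lemma penA (lam : nat -> R) (x : 'rV[R]_p) (i : 'I_p) (r : nat) (d h : R) :
  (forall a b, (a <= b < p)%N -> lam b <= lam a) ->
  x 0 i = 0 -> #|[set j : 'I_p | x 0 j != 0]| = r ->
  (forall j, x 0 j != 0 -> d <= `|x 0 j|) -> `|h| < d ->
  slope_pen lam (h *: delta_mx 0 i + x) <= slope_pen lam x + `|h| * lam r.
Proof.
move=> Hl xi0 Hr Hd hd.
set y := h *: delta_mx 0 i + x.
have Hj : forall j, j != i -> x 0 j = y 0 j.
  by move=> j ne; rewrite /y ycoord (negbTE ne).
have := @key lam x y i Hj Hl; rewrite -pen_wsum.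
have yi : y 0 i = h by rewrite /y ycoord eqxx xi0 add0r.
rewrite yi xi0 normr0 sub0r.
set k := index _ _.
have vin : `|h| \in srt y.
  rewrite (perm_mem (perm_srt y)) -yi; apply: (map_f (fun j => `|y 0 j|)).
  by rewrite mem_enum.
have kp : (k < p)%N by rewrite -(size_srt y) index_mem.
have e : (srt y)`_k = `|h| := nth_index 0 vin.
have cnt1 : count (fun z => `|h| < z) (srt y) = r.
  rewrite count_srt -Hr; apply: eq_card => j; rewrite !inE.
  case: (eqVneq j i) => [->|ne]; first by rewrite yi ltxx xi0 eqxx.
  rewrite -(Hj j ne); case: (eqVneq (x 0 j) 0) => [->|nz].
    by rewrite normr0 ltNge normr_ge0.
  by rewrite (lt_le_trans hd (Hd j nz)).
have cd : count (fun z => `|h| < z) (drop k (srt y)) = 0%N.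
  apply/eqP; rewrite -leqn0 leqNgt -has_count; apply/hasPn => z /(nthP 0) [m hm <-].
  rewrite nth_drop -leNgt -e; apply: srt_ge.
  by move: hm; rewrite size_drop size_srt leq_addr /=; lia.
have kr : (r <= k)%N.
  rewrite -cnt1 (count_take_drop _ _ k) cd addn0.
  apply: leq_trans (count_size _ _) _.
  by rewrite size_take_min geq_minl.
have lk : lam k <= lam r by apply: Hl; rewrite kr kp.
have : `|h| * lam k <= `|h| * lam r by rewrite ler_wpM2l.
move=> H1 H2; lra.
Qed.

Lemma penB (lam : nat -> R) (x y : 'rV[R]_p) (i : 'I_p) (r : nat) :
  (forall a b, (a <= b < p)%N -> lam b <= lam a) ->
  (forall j, j != i -> x 0 j = y 0 j) ->
  x 0 i != 0 -> y 0 i != 0 -> `|y 0 i| <= `|x 0 i| ->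
  #|[set j : 'I_p | x 0 j != 0]| = r ->
  slope_pen lam y + lam r.-1 * (`|x 0 i| - `|y 0 i|) <= slope_pen lam x.
Proof.
move=> Hl Hj xi yi le Hr.
have := @key lam x y i Hj Hl; rewrite -pen_wsum.
set v := `|y 0 i|.
set k := index _ _.
have vin : v \in srt y.
  rewrite (perm_mem (perm_srt y)); apply: (map_f (fun j => `|y 0 j|)).
  by rewrite mem_enum.
have kp : (k < p)%N by rewrite -(size_srt y) index_mem.
have e : (srt y)`_k = v := nth_index 0 vin.
have cnt1 : count (fun z => 0 < z) (srt y) = r.
  rewrite count_srt -Hr; apply: eq_card => j; rewrite !inE.
  case: (eqVneq j i) => [->|ne]; first by rewrite normr_gt0 xi yi.
  by rewrite -(Hj j ne) normr_gt0.
have ct : count (fun z => 0 < z) (take k.+1 (srt y)) = k.+1.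
  have sz : size (take k.+1 (srt y)) = k.+1 by rewrite size_takel // size_srt.
  apply/eqP; rewrite -{2}sz -all_count; apply/allP => z /(nthP 0) [m hm <-].
  rewrite sz in hm; rewrite nth_take //.
  apply: (lt_le_trans _ (@srt_ge y m k _)); last by rewrite -ltnS hm kp.
  by rewrite e /v normr_gt0.
have kr : (k.+1 <= r)%N.
  by rewrite -cnt1 (count_take_drop _ _ k.+1) ct leq_addr.
have rp : (r <= p)%N by rewrite -cnt1 -(size_srt y) count_size.
have lk : lam r.-1 <= lam k by apply: Hl; apply/andP; split; lia.
have : lam r.-1 * (`|x 0 i| - v) <= lam k * (`|x 0 i| - v).
  by rewrite ler_wpM2r // subr_ge0.
move=> H1 H2; lra.
Qed.

End Comb.
Arguments penA {R p lam x i r d h}. Arguments penB {R p lam x y i r}. Arguments ycoord {R p}.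
Section An.
Local Open Scope classical_set_scope.
Lemma right_bound (R : realType) (g : R -> R) (D c d : R) :
  g @ 0^' --> D -> 0 < d -> (forall h, 0 < h -> h < d -> c <= g h) -> c <= D.
Proof.
move=> gD d0 H; apply: (cvgr_to_ge (cvg_dnbhs_at_right gD)).
near=> h; apply: H; near: h; [exact: nbhs_right_gt| exact: nbhs_right_lt].
Unshelve. all: by end_near.
Qed.

Lemma left_bound (R : realType) (g : R -> R) (D c d : R) :
  g @ 0^' --> D -> 0 < d -> (forall h, - d < h -> h < 0 -> g h <= c) -> D <= c.
Proof.
move=> gD d0 H; apply: (cvgr_to_le (cvg_dnbhs_at_left gD)).
near=> h; apply: H; near: h; [apply: nbhs_left_gt; rewrite oppr_lt0 //| exact: nbhs_left_lt].
Unshelve. all: by end_near.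
Qed.

Lemma quot_cvg (R : realType) (p : nat) (l : 'rV[R]_p -> R) x v :
  differentiable l x ->
  (fun h : R => h^-1 * (l (h *: v + x) - l x)) @ 0^' --> derive l x v.
Proof.
move=> dl; have := @diff_derivable _ _ _ l x v dl; rewrite /derivable /derive.
by [].
Qed.
End An.

Lemma exists_d (R : realType) p (x : 'rV[R]_p) :
  exists2 d : R, 0 < d & forall j, x 0 j != 0 -> d <= `|x 0 j|.
Proof.
suff H : forall s : seq 'I_p, exists2 d : R, 0 < d &
    forall j, j \in s -> x 0 j != 0 -> d <= `|x 0 j|.
  by have [d d0 Hd] := H (enum 'I_p); exists d => // j; apply: Hd; rewrite mem_enum.
elim=> [|j s [d d0 Hd]]; first by exists 1.
case: (eqVneq (x 0 j) 0) => [xj0|nz].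
  exists d => // k; rewrite inE => /orP [/eqP ->|ks]; first by rewrite xj0 eqxx.
  exact: Hd.
exists (Order.min d `|x 0 j|); first by rewrite lt_min d0 normr_gt0 nz.
move=> k; rewrite inE => /orP [/eqP -> _|ks kn]; first by rewrite ge_min lexx orbT.
by rewrite ge_min Hd.
Qed.

Arguments exists_d {R p}.
Arguments right_bound {R g D c d}. Arguments left_bound {R g D c d}.

Lemma zero_case (R : realType) (p : nat) (l : 'rV[R]_p -> R) (lam : nat -> R)
  (bhat : 'rV[R]_p) (r : nat) (i : 'I_p) :
  (forall b : 'rV[R]_p, differentiable l b) ->
  (forall i j : nat, (i <= j < p)%N -> lam j <= lam i) ->
  (forall b : 'rV[R]_p, l bhat + slope_pen lam bhat <= l b + slope_pen lam b) ->
  #|[set i : 'I_p | bhat 0 i != 0]| = r ->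
  bhat 0 i = 0 -> `|Ucoord l bhat i| <= lam r.
Proof.
move=> Hd Hl Hmin Hr xi0.
have [d d0 Hdd] := exists_d bhat.
have Q := @quot_cvg R p l bhat (delta_mx 0 i) (Hd bhat).
have Hb : forall h, `|h| < d ->
    - (`|h| * lam r) <= l (h *: delta_mx 0 i + bhat) - l bhat.
  move=> h hd; have := Hmin (h *: delta_mx 0 i + bhat).
  have := penA Hl xi0 Hr Hdd hd; move=> H1 H2; lra.
have Dge : - lam r <= derive l bhat (delta_mx 0 i).
  apply: (right_bound Q d0) => h h0 hd.
  have := Hb h; rewrite gtr0_norm // => /(_ hd) H.
  have : h^-1 * (- (h * lam r)) <= h^-1 * (l (h *: delta_mx 0 i + bhat) - l bhat).
    by rewrite ler_wpM2l // invr_ge0 ltW.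
  by rewrite mulrN mulrA mulVf ?mul1r // gt_eqF.
have Dle : derive l bhat (delta_mx 0 i) <= lam r.
  apply: (left_bound Q d0) => h hd h0.
  have := Hb h; rewrite ltr0_norm // => H.
  have hd' : - h < d by rewrite ltrNl.
  have {}H := H hd'.
  have : h^-1 * (l (h *: delta_mx 0 i + bhat) - l bhat) <= h^-1 * (- (- h * lam r)).
    by rewrite ler_wnM2l // invr_le0 ltW.
  by rewrite mulNr opprK mulrA mulVf ?mul1r // lt_eqF.
by rewrite /Ucoord normrN ler_norml Dge Dle.
Qed.

Lemma nonzero_case (R : realType) (p : nat) (l : 'rV[R]_p -> R) (lam : nat -> R)
  (bhat : 'rV[R]_p) (r : nat) (i : 'I_p) :
  (forall b : 'rV[R]_p, differentiable l b) ->
  (forall i j : nat, (i <= j < p)%N -> lam j <= lam i) ->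
  (forall b : 'rV[R]_p, l bhat + slope_pen lam bhat <= l b + slope_pen lam b) ->
  #|[set i : 'I_p | bhat 0 i != 0]| = r ->
  (0 < bhat 0 i -> lam r.-1 <= Ucoord l bhat i) /\
  (bhat 0 i < 0 -> Ucoord l bhat i <= - lam r.-1).
Proof.
move=> Hd Hl Hmin Hr.
have Q := @quot_cvg R p l bhat (delta_mx 0 i) (Hd bhat).
have Hj : forall h j, j != i -> bhat 0 j = (h *: delta_mx 0 i + bhat) 0 j.
  by move=> h j ne; rewrite ycoord (negbTE ne).
have yi : forall h, (h *: delta_mx 0 i + bhat) 0 i = bhat 0 i + h.
  by move=> h; rewrite ycoord eqxx.
split=> xi.
- suff : derive l bhat (delta_mx 0 i) <= - lam r.-1 by rewrite /Ucoord; lra.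
  apply: (left_bound Q xi) => h hd h0.
  have H2 := Hmin (h *: delta_mx 0 i + bhat).
  have ey : `|(h *: delta_mx 0 i + bhat) 0 i| = bhat 0 i + h.
    by rewrite yi gtr0_norm //; lra.
  have ex : `|bhat 0 i| = bhat 0 i by rewrite gtr0_norm.
  have yn : (h *: delta_mx 0 i + bhat) 0 i != 0 by rewrite yi; apply: lt0r_neq0; lra.
  have le : `|(h *: delta_mx 0 i + bhat) 0 i| <= `|bhat 0 i| by rewrite ey ex; lra.
  have H1 := penB Hl (Hj h) (lt0r_neq0 xi) yn le Hr.
  rewrite ey ex in H1.
  have H : - h * lam r.-1 <= l (h *: delta_mx 0 i + bhat) - l bhat.
    have e2 : bhat 0 i - (bhat 0 i + h) = - h by ring.
    by move: H1; rewrite e2; lra.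
  have : h^-1 * (l (h *: delta_mx 0 i + bhat) - l bhat) <= h^-1 * (- h * lam r.-1).
    by rewrite ler_wnM2l // invr_le0 ltW.
  by rewrite mulNr mulrN mulrA mulVf ?mul1r // lt_eqF.
- suff : lam r.-1 <= derive l bhat (delta_mx 0 i) by rewrite /Ucoord; lra.
  have xi' : 0 < - bhat 0 i by rewrite oppr_gt0.
  apply: (right_bound Q xi') => h h0 hd.
  have H2 := Hmin (h *: delta_mx 0 i + bhat).
  have ey : `|(h *: delta_mx 0 i + bhat) 0 i| = - (bhat 0 i + h).
    by rewrite yi ltr0_norm //; lra.
  have ex : `|bhat 0 i| = - bhat 0 i by rewrite ltr0_norm.
  have yn : (h *: delta_mx 0 i + bhat) 0 i != 0 by rewrite yi; apply: ltr0_neq0; lra.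
  have le : `|(h *: delta_mx 0 i + bhat) 0 i| <= `|bhat 0 i| by rewrite ey ex; lra.
  have H1 := penB Hl (Hj h) (ltr0_neq0 xi) yn le Hr.
  rewrite ey ex in H1.
  have H : h * lam r.-1 <= l (h *: delta_mx 0 i + bhat) - l bhat.
    have e2 : - bhat 0 i - - (bhat 0 i + h) = h by ring.
    by move: H1; rewrite e2; lra.
  have : h^-1 * (h * lam r.-1) <= h^-1 * (l (h *: delta_mx 0 i + bhat) - l bhat).
    by rewrite ler_wpM2l // invr_ge0 ltW.
  by rewrite mulrA mulVf ?mul1r // gt_eqF.
Qed.

Theorem theorem3 (R : realType) (p : nat) (l : 'rV[R]_p -> R) (lam : nat -> R)
  (bhat : 'rV[R]_p) (r : nat) :
  convex_fun l ->
  (forall b : 'rV[R]_p, differentiable l b) ->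
  (forall i j : nat, (i <= j < p)%N -> lam j <= lam i) ->
  (forall i : nat, (i < p)%N -> 0 <= lam i) ->
  (forall b : 'rV[R]_p, l bhat + slope_pen lam bhat <= l b + slope_pen lam b) ->
  #|[set i : 'I_p | bhat 0 i != 0]| = r ->
  (0 < r)%N ->
  (forall a : R, 0 < a -> forall i : 'I_p,
     (bhat 0 i != 0 <-> lam r.-1 < `|Tcoord l bhat a i|) /\
     (bhat 0 i != 0 -> lam r.-1 <= `|Ucoord l bhat i|)) /\
  ((forall i j : nat, (i < j < p)%N -> lam j < lam i) ->
     forall i : 'I_p, lam r.-1 <= `|Ucoord l bhat i| -> bhat 0 i != 0).
Proof.
move=> _ Hd Hl Hnn Hmin Hr r0.
have rp : forall i : 'I_p, bhat 0 i = 0 -> (r < p)%N.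
  move=> i xi0; rewrite -Hr -[X in (_ < X)%N]card_ord -cardsT.
  apply: proper_card; rewrite properT; apply/eqP => eT.
  have : i \in [set j | bhat 0 j != 0] by rewrite eT inE.
  by rewrite inE xi0 eqxx.
have Z := fun i => @zero_case R p l lam bhat r i Hd Hl Hmin Hr.
have NZ := fun i => @nonzero_case R p l lam bhat r i Hd Hl Hmin Hr.
have U2 : forall i, bhat 0 i != 0 -> lam r.-1 <= `|Ucoord l bhat i|.
  move=> i nz; have [h1 h2] := NZ i.
  case: (ltgtP (bhat 0 i) 0) => [xn|xp|x0]; last by rewrite x0 eqxx in nz.
    by rewrite ler_normr; apply/orP; right; have := h2 xn; lra.
  by rewrite ler_normr; apply/orP; left; have := h1 xp; lra.
split.
  move=> a a0 i; split; last exact: U2.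
  split.
    move=> nz; have [h1 h2] := NZ i; rewrite /Tcoord.
    case: (ltgtP (bhat 0 i) 0) => [xn|xp|x0]; last by rewrite x0 eqxx in nz.
      have := h2 xn; have : a * bhat 0 i < 0 by rewrite pmulr_rlt0.
      move=> H1 H2; rewrite ltr_normr; apply/orP; right; lra.
    have := h1 xp; have : 0 < a * bhat 0 i by rewrite mulr_gt0.
    move=> H1 H2; rewrite ltr_normr; apply/orP; left; lra.
  move=> H; apply/eqP => xi0; move: H.
  have := Z i xi0; rewrite /Tcoord xi0 mulr0 addr0 => H1 H2.
  have : lam r <= lam r.-1 by apply: Hl; rewrite leq_pred (rp i xi0).
  lra.
move=> Hs i H; apply/eqP => xi0.
have := Z i xi0.
have : lam r < lam r.-1 by apply: Hs; rewrite (rp i xi0) andbT; lia.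
lra.
Qed.
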